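(* Let $(\Gamma,\gamma)$ be a connected spin network which is not a trivial component, and let $e_0$ be a bridge of $\Gamma$ (an edge whose removal disconnects the graph). If $\gamma(e_0)\neq 0$ then $\langle\Gamma,\gamma\rangle^P=0$.
   Context: A cubic ribbon graph $\Gamma=(G,R)$: $G$ a finite graph with all vertices of degree $3$ (multiple edges and loops allowed, a loop counting $2$; a trivial component is a single edge closing on itself with no vertex), $R$ a cyclic ordering of half-edges at each vertex, determining an embedding in a closed orientable surface. A decoration $\gamma:E(G)\to\{0,1,\dots\}$ is admissible if at each vertex with incident decorations $a,b,c$ (loop counted twice) $a+b+c$ is even and $|a-b|\le c\le a+b$; a spin network is $(\Gamma,\gamma)$ with $\gamma$ admissible. Penrose evaluation: replace each edge $e$ by $\gamma(e)$ parallel strands on the thickened embedded graph; at each vertex join strands without crossings, $\frac{a+b-c}{2}$ between the $a$- and $b$-edges, $\frac{a+c-b}{2}$ between $a,c$, $\frac{b+c-a}{2}$ between $b,c$; insert a permutation $\sigma_e\in\mathfrak S_{\gamma(e)}$ on each edge; $\langle\Gamma,\gamma\rangle^P=\sum_{\vec\sigma}(\prod_e\mathrm{sign}\,\sigma_e)(-2)^{N(\vec\sigma)}$, with $N(\vec\sigma)$ the number of resulting closed curves. *)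

(* Defs.v *)
From mathcomp Require Import all_boot all_order all_algebra all_fingroup.
Set Implicit Arguments. Unset Strict Implicit. Unset Printing Implicit Defensive.
Import GRing.Theory Num.Theory.

(* Combinatorial encoding of a cubic ribbon graph without trivial components:
   half-edges are 'I_n; [al] pairs half-edges into edges (fixed-point-free
   involution); [sg] is the cyclic ordering at vertices (vertices = orbits
   of [sg], all of size 3). *)

Definition cubic_ribbon n (al sg : 'I_n -> 'I_n) : Prop :=
  (forall h, al (al h) = h) /\ (forall h, al h <> h) /\
  (forall h, sg (sg (sg h)) = h) /\ (forall h, sg h <> h).

Definition decoration n (al : 'I_n -> 'I_n) (g : 'I_n -> nat) : Prop :=
  forall h, g (al h) = g h.

Definition admissible n (sg : 'I_n -> 'I_n) (g : 'I_n -> nat) : Prop :=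
  forall h, let a := g h in let b := g (sg h) in let c := g (sg (sg h)) in
    ~~ odd (a + b + c) /\ a <= b + c /\ b <= a + c /\ c <= a + b.

Definition gstep n (al sg : 'I_n -> 'I_n) : rel 'I_n :=
  fun x y => (y == sg x) || (y == al x).

Definition connected_graph n (al sg : 'I_n -> 'I_n) : Prop :=
  forall x y, connect (gstep al sg) x y.

Definition gstep_minus n (al sg : 'I_n -> 'I_n) (h0 : 'I_n) : rel 'I_n :=
  fun x y => (y == sg x) || [&& y == al x, x != h0 & x != al h0].

(* the edge {h0, al h0} is a bridge: removing it disconnects the graph,
   i.e. some two vertices (represented by half-edges at them) are no longer
   connected *)
Definition bridge n (al sg : 'I_n -> 'I_n) (h0 : 'I_n) : Prop :=
  exists x y, ~~ connect (gstep_minus al sg h0) x y.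

Definition maxdec n (g : 'I_n -> nat) : nat := \max_(h < n) g h.

(* strand ends: (h, i) with i < g h is the i-th strand end on half-edge h,
   numbered counterclockwise around the vertex of h. Other points of the
   type are inactive and fixed by all maps below. *)
Definition spt n N := ('I_n * 'I_N.+1)%type.

Definition active n N (g : 'I_n -> nat) : pred (spt n N) :=
  fun x => val x.2 < g x.1.

(* planar (non-crossing) junctions at vertices: (a+b-c)/2 strands between
   the a-edge h and the next edge sg h, etc. *)
Definition vmap n N (sg : 'I_n -> 'I_n) (g : 'I_n -> nat) (x : spt n N)
  : spt n N :=
  let h := x.1 in let i := val x.2 in
  let a := g h in let b := g (sg h) in let c := g (sg (sg h)) in
  let k := (a + b - c)./2 in
  if i < a then
    (if a - k <= i then (sg h, inord (a.-1 - i))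
     else (sg (sg h), inord (c.-1 - i)))
  else x.

(* families (sigma_e)_e of permutations of the gamma(e) strands of each
   edge, encoded as one permutation of strand ends acting only on the
   strand ends of the representative half-edge h (h < al h) of each edge,
   preserving each such block. *)
Definition edge_perms n N (al : 'I_n -> 'I_n) (g : 'I_n -> nat)
  : {set {perm spt n N}} :=
  [set s : {perm spt n N} | [forall x : spt n N,
     if (x.1 < al x.1) && (val x.2 < g x.1)
     then ((s x).1 == x.1) && (val (s x).2 < g x.1)
     else s x == x]].

(* connections along edges, with the permutation sigma_e inserted:
   strand i at h (representative) goes to strand a-1-s(i) at al h
   (the ribbon is untwisted, orientation reverses the numbering). *)
Definition emap n N (al : 'I_n -> 'I_n) (g : 'I_n -> nat)
  (s : {perm spt n N}) (x : spt n N) : spt n N :=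
  let h := x.1 in let i := val x.2 in let a := g h in
  if i < a then
    (if h < al h then (al h, inord (a.-1 - val (s x).2))
     else (al h, ((s^-1)%g (al h, inord (a.-1 - i))).2))
  else x.

Definition curve_rel n N al sg g (s : {perm spt n N}) : rel (spt n N) :=
  fun x y => (vmap sg g x == y) || (emap al g s x == y).

Definition ncurves n N al sg g (s : {perm spt n N}) : nat :=
  n_comp (curve_rel al sg g s) [pred x | active g x].

Definition penrose n (al sg : 'I_n -> 'I_n) (g : 'I_n -> nat) : int :=
  let N := maxdec g in
  (\sum_(s in edge_perms N al g)
     ((-1) ^+ odd_perm s * (-2) ^+ ncurves al sg g s))%R.

(* Main.v *)
Require Import Defs.
From mathcomp Require Import all_boot all_order all_algebra all_fingroup.
From mathcomp Require Import zify.
Set Implicit Arguments. Unset Strict Implicit. Unset Printing Implicit Defensive.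
Import GRing.Theory Num.Theory.
Set Implicit Arguments. Unset Strict Implicit. Unset Printing Implicit Defensive.

Lemma invol_parity (T : finType) (f : T -> T) (O : {set T}) :
  (forall x, x \in O -> f x \in O) -> (forall x, x \in O -> f (f x) = x) ->
  odd #|O| = odd #|[set x in O | f x == x]|.
Proof.
move=> HO Hf; have [m Hm] : exists m, #|O| <= m by exists #|O|.
elim: m O Hm HO Hf => [|m IH] O Hm HO Hf.
  move: Hm; rewrite leqn0 => /eqP /cards0_eq ->.
  by rewrite cards0 (_ : [set x in set0 | _] = set0) ?cards0 //; apply/setP => y; rewrite !inE.
case: (set_0Vmem O) => [->|[x Hx]].
  by rewrite cards0 (_ : [set x in set0 | _] = set0) ?cards0 //; apply/setP => y; rewrite !inE.
set D := [set x; f x].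
have sDO : D \subset O by apply/subsetP => y; rewrite !inE => /orP [] /eqP ->; [exact: Hx | exact: HO].
set P := O :\: D.
have HP : forall y, y \in P -> f y \in P.
  move=> y; rewrite !inE => /andP [] /norP [Hy1 Hy2] Hy; rewrite HO // andbT.
  apply/norP; split; apply/eqP => E.
  - by move/eqP: Hy2; apply; rewrite -E Hf.
  - by move/eqP: Hy1; apply; rewrite -(Hf y Hy) E Hf.
have HPf : forall y, y \in P -> f (f y) = y by move=> y; rewrite inE => /andP [_]; exact: Hf.
have E1 : #|O| = #|D| + #|P| by rewrite -(cardsID D O) (setIidPr sDO).
have Dx : x \in D by rewrite !inE eqxx.
have cP : #|P| <= m.
  have : 0 < #|D| by apply/card_gt0P; exists x.
  lia.
have IHP := IH P cP HP HPf.
set F := [set y in O | f y == y].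
have E2 : #|F| = #|F :&: D| + #|[set y in P | f y == y]|.
  rewrite -(cardsID D F); congr (_ + _); apply: eq_card => y; rewrite !inE.
  by case: (y \in O); rewrite ?andbF ?andbT.
rewrite E1 E2 !oddD IHP; congr (_ (+) _).
rewrite cards2; case: eqP => Efx /=.
- rewrite (_ : F :&: D = [set x]) ?cards1 //; apply/setP => y; rewrite !inE -Efx orbb.
  case: (eqVneq y x) => [->|]; last by rewrite andbF.
  by rewrite Hx -Efx eqxx.
- rewrite (_ : F :&: D = set0) ?cards0 //; apply/setP => y; rewrite !inE.
  case: (eqVneq y x) => [->|_] /=.
    by rewrite andbT (introF eqP (fun E => Efx (esym E))) andbF.
  case: (eqVneq y (f x)) => [->|_] /=; last by rewrite andbF.
  by rewrite Hf // andbT (introF eqP Efx) andbF.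
Qed.

Section S.
Variables (n : nat) (al sg : 'I_n -> 'I_n) (g : 'I_n -> nat).
Hypothesis alK : forall h, al (al h) = h.
Hypothesis alN : forall h, al h <> h.
Hypothesis sg3 : forall h, sg (sg (sg h)) = h.
Hypothesis sgN : forall h, sg h <> h.
Hypothesis gal : forall h, g (al h) = g h.
Hypothesis adm : admissible sg g.

Local Notation N := (maxdec g).

Lemma g_le h : g h <= N.
Proof. exact: (leq_bigmax h). Qed.

Lemma sg2N h : sg (sg h) <> h.
Proof. move=> E; have := congr1 sg E; rewrite sg3 => Ex; exact: (sgN (esym Ex)). Qed.

Lemma half_eq a b c : ~~ odd (a + b + c) -> c <= a + b -> ((a + b - c)./2) * 2 = a + b - c.
Proof.
move=> Ho Hc.
have Ho' : odd (a + b - c) = false by rewrite oddB // !oddD in Ho *; exact/negbTE.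
have := odd_double_half (a + b - c); rewrite Ho' add0n muln2 => E.
by rewrite -{2}E.
Qed.

Lemma vmapK : involutive (@vmap n N sg g).
Proof.
case=> h i.
have [Hp [H1 [H2 H3]]] := adm h.
set a := g h in Hp H1 H2 H3 *; set b := g (sg h) in Hp H1 H2 H3 *; set c := g (sg (sg h)) in Hp H1 H2 H3 *.
have Hk := half_eq Hp H3.
set k := (a + b - c)./2 in Hk *.
rewrite [vmap _ _ (h, i)]/vmap /= -/a -/b -/c -/k.
have Ga := g_le h; have Gb := g_le (sg h); have Gc := g_le (sg (sg h)).
case: ifPn => Hia; last by rewrite /vmap /= -/a (negbTE Hia).
case: ifPn => Hk2.
- have Hj : a.-1 - i <= N by have := g_le h; lia.
  rewrite /vmap /= sg3 -/a -/b -/c inordK // ifT; last by lia.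
  have Hp' := adm (sg h); rewrite /= sg3 -/a -/b -/c in Hp'.
  case: Hp' => Hp' _.
  have Hk' := half_eq Hp' (ltac:(lia) : a <= b + c).
  rewrite ifF; last by lia.
  congr pair; apply: val_inj; rewrite /= inordK; lia.
- have Hj : c.-1 - i <= N by have := g_le (sg (sg h)); lia.
  rewrite /vmap /= sg3 -/a -/b -/c inordK // ifT; last by lia.
  have Hp' := adm (sg (sg h)); rewrite /= sg3 -/a -/b -/c in Hp'.
  case: Hp' => Hp' _.
  have Hk' := half_eq Hp' (ltac:(lia) : b <= c + a).
  rewrite ifT; last by lia.
  congr pair; apply: val_inj; rewrite /= inordK; lia.
Qed.

Definition rep (x : spt n N) := (x.1 < al x.1) && (val x.2 < g x.1).

Lemma ep_rep (s : {perm spt n N}) x : s \in edge_perms N al g -> rep x ->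
  (s x).1 = x.1 /\ val (s x).2 < g x.1.
Proof.
rewrite inE => /forallP /(_ x); rewrite /rep => + Hx; rewrite Hx.
by case/andP => /eqP -> ->.
Qed.

Lemma ep_fix (s : {perm spt n N}) x : s \in edge_perms N al g -> ~~ rep x -> s x = x.
Proof.
rewrite inE => /forallP /(_ x); rewrite /rep => + Hx; rewrite (negbTE Hx).
by move/eqP.
Qed.

Lemma ep_inv (s : {perm spt n N}) z : s \in edge_perms N al g -> rep z ->
  ((s^-1)%g z).1 = z.1 /\ val ((s^-1)%g z).2 < g z.1.
Proof.
move=> Hs Hz; set w := (s^-1)%g z.
have Ew : s w = z by rewrite /w permKV.
case Hw: (rep w).
- by have [E1 E2] := ep_rep Hs Hw; rewrite -Ew E1; split => //; case/andP: Hw.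
- by move: Ew; rewrite (ep_fix Hs (negbT Hw)) => Ew; rewrite Ew Hz in Hw.
Qed.

Lemma emapK (s : {perm spt n N}) : s \in edge_perms N al g -> involutive (emap al g s).
Proof.
move=> Hs [h i].
rewrite [emap _ _ _ (h, i)]/emap /=.
case: ifPn => Hia; last by rewrite /emap /= (negbTE Hia).
case: ifPn => Hh.
- have [E1 E2] := ep_rep Hs (ltac:(rewrite /rep /= Hh Hia //) : rep (h, i)).
  have Ga := g_le h.
  rewrite /emap /= gal inordK; last by lia.
  rewrite ifT; last by lia.
  rewrite alK ltnNge ltnW //= (_ : (h, inord _) = s (h, i)) ?permK //.
  by case: (s (h,i)) E1 E2 => /= h' j -> Hj; congr pair; apply: val_inj; rewrite /= inordK; lia.
- have Hah : al h < al (al h).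
    by rewrite alK ltn_neqAle leqNgt Hh andbT; apply/eqP => /val_inj; exact: alN.
  have Ga := g_le h.
  have Hz : rep ((al h, inord ((g h).-1 - i)) : spt n N) by rewrite /rep /= Hah gal inordK //; lia.
  have [E1 E2] := ep_inv Hs Hz.
  rewrite /= in E1 E2.
  rewrite gal in E2; rewrite /emap /= gal E2 Hah alK.
  set w := (s^-1)%g _ in E1 E2 *.
  have -> : (al h, w.2) = w by case: w E1 {E2} => /= ? ? ->.
  rewrite /w permKV /= inordK; last by lia.
  congr pair; apply: val_inj; rewrite /= inordK; lia.
Qed.

Lemma ep1 (s : {perm spt n N}) x : s \in edge_perms N al g -> (s x).1 = x.1.
Proof.
move=> Hs; case Hx: (rep x); first by have [] := ep_rep Hs Hx.
by rewrite ep_fix ?Hx.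
Qed.

Lemma epV1 (s : {perm spt n N}) x : s \in edge_perms N al g -> ((s^-1)%g x).1 = x.1.
Proof. by move=> Hs; have := ep1 ((s^-1)%g x) Hs; rewrite permKV => <-. Qed.

Lemma vmap_act (x : spt n N) : active g x -> active g (vmap sg g x) /\ (vmap sg g x).1 != x.1.
Proof.
case: x => h i; rewrite /active /vmap /= => Hia.
have [Hp [H1 [H2 H3]]] := adm h.
set a := g h in Hp H1 H2 H3 Hia *; set b := g (sg h) in Hp H1 H2 H3 *; set c := g (sg (sg h)) in Hp H1 H2 H3 *.
have Hk := half_eq Hp H3.
have Ga := g_le h; have Gb := g_le (sg h); have Gc := g_le (sg (sg h)).
rewrite Hia; case: ifPn => Hk2 /=.
- rewrite inordK; last by lia.
  split; first by rewrite -/b; lia.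
  by apply/eqP; exact: sgN.
- rewrite inordK; last by lia.
  split; first by rewrite -/c; lia.
  by apply/eqP; exact: sg2N.
Qed.

Lemma emap_act (s : {perm spt n N}) x : s \in edge_perms N al g -> active g x ->
  active g (emap al g s x) /\ (emap al g s x).1 = al x.1.
Proof.
move=> Hs; case: x => h i; rewrite /active /emap /= => Hia.
have Ga := g_le h.
rewrite Hia; case: ifPn => Hh /=.
- rewrite gal inordK; last by lia.
  by split => //; lia.
- rewrite gal; split => //.
  have Hah : al h < al (al h).
    by rewrite alK ltn_neqAle leqNgt Hh andbT; apply/eqP => /val_inj; exact: alN.
  have Hz : rep ((al h, inord ((g h).-1 - i)) : spt n N) by rewrite /rep /= Hah gal inordK //; lia.
  by have [_ E2] := ep_inv Hs Hz; rewrite gal in E2.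
Qed.

Lemma vmap1 (x : spt n N) : [\/ (vmap sg g x).1 = x.1, (vmap sg g x).1 = sg x.1 | (vmap sg g x).1 = sg (sg x.1)].
Proof. by rewrite /vmap; case: ifP => _; [case: ifP => _; [constructor 2 | constructor 3] | constructor 1]. Qed.

Lemma emap1 (s : {perm spt n N}) (x : spt n N) : (emap al g s x).1 = x.1 \/ (emap al g s x).1 = al x.1.
Proof. by rewrite /emap; case: ifP => _; [case: ifP => _; right | left]. Qed.

Lemma emap_inact (s : {perm spt n N}) (x : spt n N) : ~~ active g x -> emap al g s x = x.
Proof. by rewrite /emap /active => /negbTE ->. Qed.

Lemma vmap_inact (x : spt n N) : ~~ active g x -> vmap sg g x = x.
Proof. by rewrite /vmap /active => /negbTE ->. Qed.

Variable h0 : 'I_n.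

Definition Ecut (s : {perm spt n N}) (x : spt n N) :=
  if (x.1 != h0) && (x.1 != al h0) then emap al g s x else x.
Definition cutrel s : rel (spt n N) := fun x y => (vmap sg g x == y) || (Ecut s x == y).

Lemma alC h : (al h != h0) && (al h != al h0) = (h != h0) && (h != al h0).
Proof. by rewrite andbC (can_eq alK); congr (_ && _); rewrite -{1}(alK h0) (can_eq alK). Qed.

Lemma EcutK s : s \in edge_perms N al g -> involutive (Ecut s).
Proof.
move=> Hs x; rewrite [Ecut s x]/Ecut; case: ifP => C; last by rewrite /Ecut C.
case Ha: (active g x); last by rewrite emap_inact ?Ha // /Ecut C emap_inact ?Ha.
have [_ E] := emap_act Hs Ha; rewrite /Ecut E alC C; exact: emapK.
Qed.

Lemma cutrel_sym s : s \in edge_perms N al g -> symmetric (cutrel s).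
Proof.
move=> Hs x y; rewrite /cutrel (inv_eq vmapK) (inv_eq (EcutK Hs)).
by rewrite (eq_sym x) (eq_sym x).
Qed.

Lemma minus_sg h : connect (gstep_minus al sg h0) h (sg h).
Proof. by apply: connect1; rewrite /gstep_minus eqxx. Qed.

Lemma cut_step s x y : s \in edge_perms N al g -> cutrel s x y ->
  connect (gstep_minus al sg h0) x.1 y.1.
Proof.
move=> Hs /orP [] /eqP <-.
- case: (vmap1 x) => ->; first exact: connect0; first exact: minus_sg.
  exact: connect_trans (minus_sg _) (minus_sg _).
- rewrite /Ecut; case: ifP => C; last exact: connect0.
  case: (emap1 s x) => ->; first exact: connect0.
  by apply: connect1; rewrite /gstep_minus eqxx C orbT.
Qed.

Lemma cut_sep s p y : s \in edge_perms N al g -> connect (cutrel s) p y ->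
  connect (gstep_minus al sg h0) p.1 y.1.
Proof.
move=> Hs /connectP [pt Hp ->]; elim: pt p Hp => [|z pt IH] p /=; first by move=> _; exact: connect0.
by case/andP => Hz Hp; apply: connect_trans (cut_step Hs Hz) (IH _ Hp).
Qed.

Lemma cut_act s p y : s \in edge_perms N al g -> connect (cutrel s) p y -> active g p -> active g y.
Proof.
move=> Hs /connectP [pt Hp ->]; elim: pt p Hp => [|z pt IH] p //=.
case/andP => Hz Hp Ha; apply: IH Hp _.
case/orP: Hz => /eqP <-; first by case: (vmap_act Ha).
by rewrite /Ecut; case: ifP => _ //; case: (emap_act Hs Ha).
Qed.

Definition Qp s p q := [&& connect (cutrel s) p q, Ecut s q == q & q != p].

Lemma Q_exists s p : s \in edge_perms N al g -> p.1 = h0 -> active g p -> exists q, Qp s p q.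
Proof.
move=> Hs Hp Ha.
set O := [set y | connect (cutrel s) p y].
have Hcl : forall f : spt n N -> spt n N, (forall y, cutrel s y (f y)) ->
    forall y, y \in O -> f y \in O.
  move=> f Hf y; rewrite !inE => Hy; apply: connect_trans Hy (connect1 (Hf y)).
have Hv : forall y, cutrel s y (vmap sg g y) by move=> y; rewrite /cutrel eqxx.
have He : forall y, cutrel s y (Ecut s y) by move=> y; rewrite /cutrel eqxx orbT.
have P1 := invol_parity (Hcl _ Hv) (fun y _ => vmapK y).
have P2 := invol_parity (Hcl _ He) (fun y _ => EcutK Hs y).
have E0 : [set x in O | vmap sg g x == x] = set0.
  apply/setP => y; rewrite !inE; apply/negbTE; apply/andP => [[Hy /eqP Ey]].
  have Ay := cut_act Hs Hy Ha.
  by case: (vmap_act Ay); rewrite Ey eqxx.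
rewrite E0 cards0 /= in P1; rewrite P1 in P2.
set F := [set x in O | Ecut s x == x] in P2.
have pF : p \in F by rewrite !inE connect0 /Ecut Hp eqxx /= eqxx.
have : 0 < #|F :\ p|.
  move: P2; rewrite (cardsD1 p F) pF /=; case: #|F :\ p| => //.
case/card_gt0P => q; rewrite !inE => /andP [Hqp /andP [Hq Eq]].
by exists q; rewrite /Qp Hq Eq Hqp.
Qed.

Lemma Q_prop s p q : s \in edge_perms N al g -> p.1 = h0 -> active g p ->
  ~ connect (gstep_minus al sg h0) h0 (al h0) -> Qp s p q -> q.1 = h0 /\ active g q.
Proof.
move=> Hs Hp Ha Hsep /and3P [Hq /eqP Eq _].
have Aq := cut_act Hs Hq Ha; split => //.
move: Eq; rewrite /Ecut; case: ifP => C.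
  by move=> E'; have [_ E] := emap_act Hs Aq; move: E; rewrite E' => E; case: (alN (esym E)).
case: (eqVneq q.1 h0) => // Hne _; move: C; rewrite Hne /= => /negbFE /eqP Eal.
by case: Hsep; have := cut_sep Hs Hq; rewrite Hp Eal.
Qed.

Hypothesis Hrep : h0 < al h0.

Section Swap.
Variables (p q : spt n N).
Hypotheses (Hp : p.1 = h0) (Hq : q.1 = h0) (Ap : active g p) (Aq : active g q).
Local Notation t := (tperm p q).

Lemma T1 x : (t x).1 = x.1.
Proof. by case: tpermP => // ->; rewrite ?Hp ?Hq. Qed.

Lemma T3 x : active g (t x) = active g x.
Proof. by case: tpermP => // ->; rewrite ?Ap ?Aq. Qed.

Lemma repp : rep p. Proof. by rewrite /rep Hp Hrep; move: Ap; rewrite /active Hp. Qed.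
Lemma repq : rep q. Proof. by rewrite /rep Hq Hrep; move: Aq; rewrite /active Hq. Qed.

Lemma T2 x : rep (t x) = rep x.
Proof. by case: tpermP => // ->; rewrite ?repp ?repq. Qed.

Lemma Tfix x : x.1 != h0 -> t x = x.
Proof. by move=> H; case: tpermP => // E; move: H; rewrite E ?Hp ?Hq eqxx. Qed.

Lemma Tfix_inact x : ~~ active g x -> t x = x.
Proof. by move=> H; case: tpermP => // E; move: H; rewrite E ?Ap ?Aq. Qed.

Lemma Tfix_nrep x : ~~ rep x -> t x = x.
Proof. by move=> H; case: tpermP => // E; move: H; rewrite E ?repp ?repq. Qed.

Lemma ep_swap s : s \in edge_perms N al g -> (t * s)%g \in edge_perms N al g.
Proof.
move=> Hs; rewrite inE; apply/forallP => x; rewrite permM.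
case: ifP => Hx.
- have [E1 E2] := ep_rep Hs (ltac:(by rewrite T2) : rep (t x)).
  by rewrite E1 T1 eqxx; rewrite T1 in E2; rewrite E2.
- have Hx' : ~~ rep x by rewrite /rep Hx.
  by rewrite Tfix_nrep // (ep_fix Hs Hx').
Qed.

Lemma emap_far s x : s \in edge_perms N al g -> x.1 != h0 -> x.1 != al h0 ->
  emap al g (t * s)%g x = emap al g s x.
Proof.
move=> Hs H1 H2; rewrite /emap permM Tfix // invMg tpermV permM Tfix //.
by rewrite epV1 //= -{1}(alK h0) (can_eq alK).
Qed.

Lemma Ecut_swap s : s \in edge_perms N al g -> Ecut (t * s)%g =1 Ecut s.
Proof.
move=> Hs x; rewrite /Ecut; case: ifP => // /andP [H1 H2]; exact: emap_far.
Qed.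

Lemma cutrel_swap s : s \in edge_perms N al g -> cutrel (t * s)%g =2 cutrel s.
Proof. by move=> Hs x y; rewrite /cutrel Ecut_swap. Qed.

Lemma emap_h0 s x : s \in edge_perms N al g -> x.1 = h0 ->
  emap al g (t * s)%g x = emap al g s (t x).
Proof.
move=> Hs Hx; case Ha: (active g x); last first.
  by rewrite !emap_inact ?T3 ?Ha // Tfix_inact ?Ha.
have Ha' : val (t x).2 < g x.1 by have := T3 x; rewrite Ha /active T1.
move: Ha; rewrite /active => Ha; rewrite /emap permM T1 Ha Ha' Hx Hrep.
done.
Qed.

Lemma emap_ah0 s x : s \in edge_perms N al g -> x.1 = al h0 ->
  emap al g (t * s)%g x = t (emap al g s x).
Proof.
move=> Hs Hx; case Ha: (active g x); last first.
  by rewrite !emap_inact ?Ha // Tfix_inact ?Ha.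
move: Ha; rewrite /emap /active => ->.
rewrite Hx alK ltnNge ltnW //= invMg tpermV permM.
set w := (s^-1)%g _.
have Ew : w.1 = h0 by rewrite /w epV1.
have -> : (h0, w.2) = w by case: w Ew => ? ? /= ->.
by rewrite -Ew -(T1 w); case: (t w).
Qed.

Lemma cut_curve s : s \in edge_perms N al g ->
  subrel (connect (cutrel s)) (connect (curve_rel al sg g s)).
Proof.
move=> Hs; apply: connect_sub => x y /orP [] /eqP <-.
- by apply: connect1; rewrite /curve_rel eqxx.
- rewrite /Ecut; case: ifP => _; last exact: connect0.
  by apply: connect1; rewrite /curve_rel eqxx orbT.
Qed.

Lemma swap_sub s : s \in edge_perms N al g -> connect (cutrel s) p q ->
  subrel (curve_rel al sg g (t * s)%g) (connect (curve_rel al sg g s)).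
Proof.
move=> Hs Hpq.
have Tc : forall w, connect (curve_rel al sg g s) w (t w).
  move=> w; case: tpermP => [->|->|_ _]; last exact: connect0.
  - exact: (cut_curve Hs).
  - by apply: (cut_curve Hs); rewrite (sym_connect_sym (cutrel_sym Hs)).
move=> x y /orP [] /eqP <-; first by apply: connect1; rewrite /curve_rel eqxx.
case: (eqVneq x.1 h0) => H1.
  rewrite emap_h0 //; apply: connect_trans (Tc x) (connect1 _).
  by rewrite /curve_rel eqxx orbT.
case: (eqVneq x.1 (al h0)) => H2.
  rewrite emap_ah0 //; apply: connect_trans (connect1 _) (Tc _).
  by rewrite /curve_rel eqxx orbT.
by rewrite emap_far //; apply: connect1; rewrite /curve_rel eqxx orbT.
Qed.

End Swap.

Hypothesis Hg0 : 0 < g h0.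
Hypothesis Hsep : ~ connect (gstep_minus al sg h0) h0 (al h0).

Definition p0 : spt n N := (h0, inord 0).
Lemma p01 : p0.1 = h0. Proof. by []. Qed.
Lemma Ap0 : active g p0. Proof. by rewrite /active /= inordK. Qed.

Definition qq s := odflt p0 [pick q | Qp s p0 q].

Lemma qq_spec s : s \in edge_perms N al g -> Qp s p0 (qq s).
Proof.
move=> Hs; rewrite /qq; case: pickP => [q Hq //|H].
by have [q Hq] := Q_exists Hs p01 Ap0; rewrite H in Hq.
Qed.

Lemma qq_prop s : s \in edge_perms N al g -> [/\ (qq s).1 = h0, active g (qq s) & qq s != p0].
Proof.
move=> Hs; have Hq := qq_spec Hs; have [H1 H2] := Q_prop Hs p01 Ap0 Hsep Hq.
by split => //; case/and3P: Hq.
Qed.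

Definition TT s := tperm p0 (qq s).

Lemma qq_swap s : s \in edge_perms N al g -> qq (TT s * s)%g = qq s.
Proof.
move=> Hs; have [H1 H2 H3] := qq_prop Hs.
rewrite /qq; congr odflt; apply: eq_pick => x.
by rewrite /Qp (eq_connect (cutrel_swap p01 H1 Hs)) (Ecut_swap p01 H1 Hs).
Qed.

Lemma ncurves_swap s : s \in edge_perms N al g ->
  ncurves al sg g (TT s * s)%g = ncurves al sg g s.
Proof.
move=> Hs; have [H1 H2 H3] := qq_prop Hs.
have Hpq : connect (cutrel s) p0 (qq s) by case/and3P: (qq_spec Hs).
have Hs' := ep_swap p01 H1 Ap0 H2 Hs.
have Hpq' : connect (cutrel (TT s * s)%g) p0 (qq s) by rewrite (eq_connect (cutrel_swap p01 H1 Hs)).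
rewrite /ncurves; apply: eq_n_comp => x y; apply/idP/idP.
- exact: (connect_sub (swap_sub p01 H1 Ap0 H2 Hs Hpq)).
- have K : (TT s * (TT s * s))%g = s by rewrite /TT tpermKg.
  rewrite -{1}K; exact: (connect_sub (swap_sub p01 H1 Ap0 H2 Hs' Hpq')).
Qed.

Definition phi s := if s \in edge_perms N al g then (TT s * s)%g else s.

Lemma phiK : involutive phi.
Proof.
move=> s; case Hs: (s \in edge_perms N al g); last by rewrite /phi Hs Hs.
have [H1 H2 H3] := qq_prop Hs.
have Hs' := ep_swap p01 H1 Ap0 H2 Hs.
rewrite /phi Hs -/(TT s) Hs'.
have -> : TT (TT s * s)%g = TT s by rewrite /TT qq_swap.
by rewrite /TT tpermKg.
Qed.

Lemma phiA s : (phi s \in edge_perms N al g) = (s \in edge_perms N al g).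
Proof.
rewrite /phi; case: ifP => Hs //.
by have [H1 H2 _] := qq_prop Hs; rewrite (ep_swap p01 H1 Ap0 H2 Hs).
Qed.

Lemma penrose0 : penrose al sg g = 0%R.
Proof.
rewrite /penrose.
set S := (\sum_(s in _) _)%R.
have E : S = (- S)%R.
  rewrite {1}/S (reindex_inj (can_inj phiK)) /= -sumrN.
  apply: eq_big => s; first exact: phiA.
  rewrite phiA => Hs; rewrite /phi Hs ncurves_swap //.
  have [_ _ H3] := qq_prop Hs.
  rewrite odd_permM odd_tperm eq_sym H3 /=.
  by case: (odd_perm s); rewrite /= ?expr0 ?expr1 ?mulN1r ?mul1r ?opprK.
have : (S *+ 2 = 0)%R by rewrite mulr2n {1}E addNr.
by move/eqP; rewrite mulrn_eq0 /= => /eqP.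
Qed.
End S.

Lemma connect_rev (T : finType) (e : rel T) :
  (forall x y, e x y -> connect e y x) -> forall x y, connect e x y -> connect e y x.
Proof.
move=> H x y /connectP [pt Hp ->]; elim: pt x Hp => [|z pt IH] x /=; first by move=> _; exact: connect0.
by case/andP => Hz Hp; apply: connect_trans (IH _ Hp) (H _ _ Hz).
Qed.

Lemma sep_of_bridge n (al sg : 'I_n -> 'I_n) (h0 : 'I_n) :
  cubic_ribbon al sg -> connected_graph al sg -> bridge al sg h0 ->
  ~ connect (gstep_minus al sg h0) h0 (al h0).
Proof.
move=> [alK [alN [sg3 sgN]]] Hc [x [y Hxy]] C.
have Hsg : forall z, gstep_minus al sg h0 z (sg z) by move=> z; rewrite /gstep_minus eqxx.
have Hrev : forall u v, gstep_minus al sg h0 u v -> connect (gstep_minus al sg h0) v u.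
  move=> u v /orP [/eqP ->|/and3P [/eqP -> H1 H2]].
    by apply: connect_trans (connect1 (Hsg _)) (connect1 _); rewrite /gstep_minus sg3 eqxx.
  apply: connect1; rewrite /gstep_minus alK eqxx /= orbC /=.
  apply/orP; left; apply/andP; split; apply/eqP => E.
  - by move/eqP: H2; apply; rewrite -E alK.
  - by move/eqP: H1; apply; apply: (can_inj alK).
have C' := connect_rev Hrev C.
move/negP: Hxy; apply; apply: connect_sub (Hc x y) => u v /orP [/eqP ->|/eqP ->].
  exact: connect1.
case: (eqVneq u h0) => [->|H1] //.
case: (eqVneq u (al h0)) => [->|H2]; first by rewrite alK.
by apply: connect1; rewrite /gstep_minus eqxx H1 H2 orbT.
Qed.

Theorem lemma4 (n : nat) (al sg : 'I_n -> 'I_n) (g : 'I_n -> nat) (h0 : 'I_n) :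
  cubic_ribbon al sg ->
  decoration al g ->
  admissible sg g ->
  connected_graph al sg ->
  bridge al sg h0 ->
  g h0 <> 0 ->
  penrose al sg g = 0%R.
Proof.
move=> Hcub Hdec Hadm Hcon Hbr Hg.
have [alK [alN [sg3 sgN]]] := Hcub.
wlog Hrep : h0 Hbr Hg / h0 < al h0.
  move=> W; case: (ltngtP h0 (al h0)) => H; first exact: (W h0).
  - apply: (W (al h0)); last by rewrite alK.
    + case: Hbr => x [y Hxy]; exists x, y; move: Hxy; apply: contra.
      apply: connect_sub => u v Huv; apply: connect1; move: Huv.
      by rewrite /gstep_minus alK (andbC (u != al h0)).
    + by rewrite Hdec.
  - by case: (alN h0); apply: val_inj; rewrite /= -H.
have Hsep := sep_of_bridge Hcub Hcon Hbr.
exact: (penrose0 alK alN sg3 sgN Hdec Hadm Hrep (ltac:(lia) : 0 < g h0) Hsep).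
Qed.
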